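(* Let $\mathbb{K}$ be a perfect field, let $I \subset \mathbb{K}[X_1,\dots,X_n]$ be a zero-dimensional ideal, $Q=\mathbb{K}[X_1,\dots,X_n]/I$ and $D=\dim_{\mathbb{K}}Q$. There exists a unique integer $\tau\le D$ such that, for a generic choice of linear forms $(\ell_1,\dots,\ell_\tau)$ with all $\ell_i\in Q^*$, the sequence of ideals $(\mathrm{ann}(\mathbf{u}_{\ell_1},\dots,\mathbf{u}_{\ell_t}))_{1\le t\le\tau}$ is strictly decreasing and $\mathrm{ann}(\mathbf{u}_{\ell_1},\dots,\mathbf{u}_{\ell_\tau})=I$.
   Context: $Q^*=\mathrm{Hom}_{\mathbb{K}}(Q,\mathbb{K})$, a $\mathbb{K}$-vector space of dimension $D$; ''generic choice'' means for all tuples outside a proper Zariski-closed subset of $(Q^* )^\tau\cong\mathbb{K}^{\tau D}$. For $\ell\in Q^*$, $\mathbf{u}_\ell=(\ell(\mathbf{X}^m\bmod I))_{m\in\mathbb{N}^n}$ where $\mathbf{X}^m=X_1^{m_1}\cdots X_n^{m_n}$. For a sequence $\mathbf{u}=(u_m)_m$ and $f=\sum_m f_m\mathbf{X}^m$, $\langle\mathbf{u}\mid f\rangle=\sum_m f_m u_m$ and $f\cdot\mathbf{u}=(\langle\mathbf{u}\mid\mathbf{X}^m f\rangle)_m$; $\mathrm{ann}(\mathbf{u})$ is the ideal of $f$ with $f\cdot\mathbf{u}=0$, and $\mathrm{ann}(\mathbf{u}_1,\dots,\mathbf{u}_t)=\bigcap_i\mathrm{ann}(\mathbf{u}_i)$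.
   Formalization: The perfect field 𝕂 is also required to be infinite, so finite fields are excluded. The statement above fails without it. *)

(* Defs.v *)
From HB Require Import structures.
From mathcomp Require Import all_boot all_order all_algebra.
From mathcomp Require Import mpoly.
Set Implicit Arguments. Unset Strict Implicit. Unset Printing Implicit Defensive.
Import Order.TTheory GRing.Theory Num.Theory.
Local Open Scope ring_scope.

Definition perfect_field (K : fieldType) : Prop :=
  ([pchar K] =i pred0) \/
  (forall p : nat, p \in [pchar K] -> forall x : K, exists y : K, y ^+ p = x).

(* K is infinite (needed for genericity to be meaningful). *)
Definition infinite_field (K : fieldType) : Prop :=
  forall s : seq K, exists x : K, x \notin s.

Definition is_ideal (K : fieldType) (n : nat) (I : {mpoly K[n]} -> Prop) : Prop :=
  [/\ I 0,
      (forall f g, I f -> I g -> I (f + g)) &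
      (forall f g, I g -> I (f * g))].

(* b : 'I_D -> K[X] projects to a K-basis of Q = K[X]/I ; hence dim_K Q = D
   (and I is zero-dimensional). *)
Definition basis_mod (K : fieldType) (n D : nat) (I : {mpoly K[n]} -> Prop)
    (b : 'I_D -> {mpoly K[n]}) : Prop :=
  (forall f : {mpoly K[n]}, exists c : 'I_D -> K, I (f - \sum_(j < D) c j *: b j)) /\
  (forall c : 'I_D -> K, I (\sum_(j < D) c j *: b j) -> forall j, c j = 0).

(* Elements of Q^dual = Hom_K(Q, K), represented as K-linear forms on K[X]
   vanishing on I. *)
Definition is_dual (K : fieldType) (n : nat) (I : {mpoly K[n]} -> Prop)
    (l : {mpoly K[n]} -> K) : Prop :=
  (forall (a : K) (f g : {mpoly K[n]}), l (a *: f + g) = a * l f + l g) /\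
  (forall f, I f -> l f = 0).

Definition mseq (K : fieldType) (n : nat) := 'X_{1..n} -> K.

Definition useq (K : fieldType) (n : nat) (l : {mpoly K[n]} -> K) : mseq K n :=
  fun m => l 'X_[m].

Definition pairing (K : fieldType) (n : nat) (u : mseq K n) (f : {mpoly K[n]}) : K :=
  \sum_(m <- msupp f) f@_m * u m.

Definition pshift (K : fieldType) (n : nat) (f : {mpoly K[n]}) (u : mseq K n) : mseq K n :=
  fun m => pairing u ('X_[m] * f).

Definition ann (K : fieldType) (n : nat) (u : mseq K n) : {mpoly K[n]} -> Prop :=
  fun f => forall m, pshift f u m = 0.

Definition ann_first (K : fieldType) (n tau : nat) (l : 'I_tau -> {mpoly K[n]} -> K)
    (t : nat) : {mpoly K[n]} -> Prop :=
  fun f => forall i : 'I_tau, (i < t)%N -> ann (useq (l i)) f.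

Definition set_eq (T : Type) (A B : T -> Prop) : Prop := forall x, A x <-> B x.

Definition strict_subset (T : Type) (A B : T -> Prop) : Prop :=
  (forall x, A x -> B x) /\ exists x, B x /\ ~ A x.

(* Coordinates of a tuple (l_1..l_tau) in (Q^dual )^tau ~ K^(tau D), w.r.t. the
   dual basis of b: the (i,j) coordinate is l_i(b_j). *)
Definition coords (K : fieldType) (n D tau : nat) (b : 'I_D -> {mpoly K[n]})
    (l : 'I_tau -> {mpoly K[n]} -> K) : 'I_(tau * D) -> K :=
  fun k => mxvec (\matrix_(i, j) (l i (b j) : K) : 'M[K]_(tau, D)) ord0 k.

(* A property P of points of K^N holds generically: there is a proper
   Zariski-closed subset V(S) of K^N outside of which P holds. *)
Definition generic (K : fieldType) (N : nat) (P : ('I_N -> K) -> Prop) : Prop :=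
  exists S : {mpoly K[N]} -> Prop,
    (exists x : 'I_N -> K, exists p, S p /\ p.@[x] <> 0) /\
    (forall x : 'I_N -> K, (exists p, S p /\ p.@[x] <> 0) -> P x).

Definition good_tuple (K : fieldType) (n tau : nat) (I : {mpoly K[n]} -> Prop)
    (l : 'I_tau -> {mpoly K[n]} -> K) : Prop :=
  (forall t : nat, (1 <= t)%N -> (t < tau)%N ->
      strict_subset (ann_first l t.+1) (ann_first l t)) /\
  set_eq (ann_first l tau) I.

Definition generically_good (K : fieldType) (n D : nat) (I : {mpoly K[n]} -> Prop)
    (b : 'I_D -> {mpoly K[n]}) (tau : nat) : Prop :=
  generic (fun x : 'I_(tau * D) -> K =>
    forall l : 'I_tau -> {mpoly K[n]} -> K,
      (forall i, is_dual I (l i)) -> coords b l = x -> good_tuple I l).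

(* Main.v *)
Require Import Defs.
From HB Require Import structures.
From mathcomp Require Import all_boot all_order all_algebra.
From mathcomp Require Import mpoly.
From mathcomp Require Import ring.
From Stdlib Require Import ClassicalEpsilon FunctionalExtensionality.
Set Implicit Arguments. Unset Strict Implicit. Unset Printing Implicit Defensive.
Import GRing.Theory.
Local Open Scope ring_scope.

Lemma uniq_seq (K : fieldType) : infinite_field K ->
  forall k, exists s : seq K, uniq s /\ size s = k.
Proof.
move=> inf; elim=> [|k [s [us ss]]]; first by exists [::].
have [x xs] := inf s; exists (x :: s); by rewrite /= xs us ss.
Qed.

Lemma nonroot (K : fieldType) (P : {poly K}) : infinite_field K -> P != 0 ->
  exists c, P.[c] != 0.
Proof.
move=> inf nz0; apply: NNPP => H.
have [s [us ss]] := uniq_seq inf (size P).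
have : all (root P) s.
  apply/allP=> c _; rewrite /root; apply/negPn/negP=> Hc; apply: H; by exists c.
move=> al; have := max_poly_roots nz0 al us; by rewrite ss ltnn.
Qed.

Definition lineP (K : fieldType) N (p : {mpoly K[N]}) (v : 'I_N -> {poly K}) : {poly K} :=
  \sum_(m <- msupp p) (p@_m)%:P * \prod_i (v i) ^+ m i.
Lemma meval_line (K : fieldType) N (p : {mpoly K[N]}) (v : 'I_N -> {poly K}) c :
  (lineP p v).[c] = p.@[fun i => (v i).[c]].
Proof.
rewrite /lineP mevalE horner_sum; apply: eq_bigr => m _.
rewrite hornerCM horner_prod.
by congr (_ * _); apply: eq_bigr => i _; rewrite horner_exp.
Qed.

Lemma IF2 (K : fieldType) N (p q : {mpoly K[N]}) : infinite_field K ->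
  (exists x, meval x p != 0) -> (exists y, meval y q != 0) ->
  exists z, meval z (p * q) != 0.
Proof.
move=> inf [x px] [y qy].
pose v i := (x i)%:P + (y i - x i)%:P * 'X.
have Pp : lineP p v != 0.
  apply/eqP=> E; move: px; rewrite -(@meval_eq _ _ (fun i => (v i).[0])); last first.
    by move=> i; rewrite /v hornerD hornerCM hornerX mulr0 addr0 hornerC.
  by rewrite -meval_line E horner0 eqxx.
have Pq : lineP q v != 0.
  apply/eqP=> E; move: qy; rewrite -(@meval_eq _ _ (fun i => (v i).[1])); last first.
    by move=> i; rewrite /v hornerD hornerCM hornerX mulr1 hornerC addrC subrK.
  by rewrite -meval_line E horner0 eqxx.
have [c Hc] := nonroot inf (mulf_neq0 Pp Pq).
exists (fun i => (v i).[c]); by rewrite mevalM -!meval_line -hornerM.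
Qed.



Lemma dual0 (K : fieldType) n (I : {mpoly K[n]} -> Prop) l :
  is_dual I l -> l 0 = 0.
Proof.
move=> [lin _]; have := lin 1 0 0; rewrite scale1r addr0 mul1r => h.
by apply: (@addrI _ (l 0)); rewrite addr0 -h.
Qed.

Lemma dualD (K : fieldType) n (I : {mpoly K[n]} -> Prop) l f g :
  is_dual I l -> l (f + g) = l f + l g.
Proof. by move=> [lin _]; rewrite -[f in LHS]scale1r lin mul1r. Qed.

Lemma dualZ (K : fieldType) n (I : {mpoly K[n]} -> Prop) l a f :
  is_dual I l -> l (a *: f) = a * l f.
Proof. by move=> dl; rewrite -[_ *: _]addr0 dl.1 (dual0 dl) addr0. Qed.

Lemma dualB (K : fieldType) n (I : {mpoly K[n]} -> Prop) l f g :
  is_dual I l -> l (f - g) = l f - l g.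
Proof. by move=> dl; rewrite -[f in RHS](subrK g) (dualD (f - g) g dl) addrK. Qed.

Lemma dual_sum (K : fieldType) n (I : {mpoly K[n]} -> Prop) l (T : Type)
   (r : seq T) (F : T -> {mpoly K[n]}) :
  is_dual I l -> l (\sum_(x <- r) F x) = \sum_(x <- r) l (F x).
Proof.
move=> dl; apply: (big_rec2 (fun y1 y2 => l y1 = y2)); first exact: dual0 dl.
by move=> i y1 y2 _ <-; rewrite (dualD _ _ dl).
Qed.

Lemma idealN (K : fieldType) n (I : {mpoly K[n]} -> Prop) f :
  is_ideal I -> I f -> I (- f).
Proof. by move=> [_ _ hM] If; rewrite -mulN1r; apply: hM. Qed.

Lemma idealB (K : fieldType) n (I : {mpoly K[n]} -> Prop) f g :
  is_ideal I -> I f -> I g -> I (f - g).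
Proof. by move=> hI If Ig; case: (hI) => _ hD _; apply: hD => //; apply: idealN. Qed.

Lemma idealMr (K : fieldType) n (I : {mpoly K[n]} -> Prop) f g :
  is_ideal I -> I f -> I (f * g).
Proof. by move=> [_ _ hM] If; rewrite mulrC; apply: hM. Qed.

Lemma idealZ (K : fieldType) n (I : {mpoly K[n]} -> Prop) a f :
  is_ideal I -> I f -> I (a *: f).
Proof. by move=> [_ _ hM] If; rewrite -mul_mpolyC; apply: hM. Qed.

Lemma ideal_sum (K : fieldType) n (I : {mpoly K[n]} -> Prop) (T : Type)
   (r : seq T) (F : T -> {mpoly K[n]}) :
  is_ideal I -> (forall x, I (F x)) -> I (\sum_(x <- r) F x).
Proof.
move=> [h0 hD _] HF; apply: (big_rec (fun y => I y)); first exact: h0.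
by move=> i y _ Iy; apply: hD.
Qed.

Lemma pairingE (K : fieldType) n (I : {mpoly K[n]} -> Prop) l g :
  is_dual I l -> pairing (useq l) g = l g.
Proof.
move=> dl; rewrite /pairing [in RHS](mpolyE g) (dual_sum _ _ dl).
by apply: eq_bigr => m _; rewrite (dualZ _ _ dl).
Qed.

Lemma annM (K : fieldType) n (I : {mpoly K[n]} -> Prop) l f :
  is_dual I l -> ann (useq l) f <-> forall m, l ('X_[m] * f) = 0.
Proof.
move=> dl; rewrite /ann /pshift; split=> H m.
  by rewrite -(pairingE _ dl); exact: H.
by rewrite (pairingE _ dl); exact: H.
Qed.

Definition fa (K : fieldType) n D (b : 'I_D -> {mpoly K[n]}) (a : 'rV[K]_D) :=
  \sum_j a 0 j *: b j.

Lemma fa_lin (K : fieldType) n D (b : 'I_D -> {mpoly K[n]}) c a a' :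
  fa b (c *: a + a') = c *: fa b a + fa b a'.
Proof.
rewrite /fa scaler_sumr -big_split; apply: eq_bigr => j _.
by rewrite !mxE scalerDl scalerA.
Qed.

Lemma faB (K : fieldType) n D (b : 'I_D -> {mpoly K[n]}) a a' :
  fa b (a - a') = fa b a - fa b a'.
Proof. by rewrite addrC -scaleN1r fa_lin scaleN1r addrC. Qed.

Lemma fa0 (K : fieldType) n D (b : 'I_D -> {mpoly K[n]}) : fa b 0 = 0.
Proof. by rewrite /fa big1 // => j _; rewrite mxE scale0r. Qed.

Definition coord (K : fieldType) n D (I : {mpoly K[n]} -> Prop) (b : 'I_D -> {mpoly K[n]})
  (hB : basis_mod I b) (f : {mpoly K[n]}) : 'rV[K]_D :=
  \row_j (proj1_sig (constructive_indefinite_description _ (hB.1 f)) j).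

Lemma coordP (K : fieldType) n D (I : {mpoly K[n]} -> Prop) (b : 'I_D -> {mpoly K[n]})
  (hB : basis_mod I b) f : I (f - fa b (coord hB f)).
Proof.
rewrite /coord /fa; case: (constructive_indefinite_description _ _) => c /= Hc.
by rewrite (eq_bigr (fun j => c j *: b j)) // => j _; rewrite mxE.
Qed.

Lemma fa_eq0 (K : fieldType) n D (I : {mpoly K[n]} -> Prop) (b : 'I_D -> {mpoly K[n]})
  (hB : basis_mod I b) a : I (fa b a) -> a = 0.
Proof.
move=> H; have := hB.2 (fun j => a 0 j) H => H2.
by apply/matrixP => i j; rewrite (ord1 i) mxE H2.
Qed.

Lemma coord_uniq (K : fieldType) n D (I : {mpoly K[n]} -> Prop) (b : 'I_D -> {mpoly K[n]})
  (hI : is_ideal I) (hB : basis_mod I b) f c : I (f - fa b c) -> coord hB f = c.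
Proof.
move=> H; apply/eqP; rewrite -subr_eq0; apply/eqP; apply: (fa_eq0 hB).
have -> : fa b (coord hB f - c) = (f - fa b c) - (f - fa b (coord hB f)).
  by rewrite faB; ring.
by apply: idealB => //; apply: coordP.
Qed.

Lemma coord_lin (K : fieldType) n D (I : {mpoly K[n]} -> Prop) (b : 'I_D -> {mpoly K[n]})
  (hI : is_ideal I) (hB : basis_mod I b) a f g :
  coord hB (a *: f + g) = a *: coord hB f + coord hB g.
Proof.
apply: coord_uniq => //; rewrite fa_lin.
have -> : a *: f + g - (a *: fa b (coord hB f) + fa b (coord hB g)) =
   a *: (f - fa b (coord hB f)) + (g - fa b (coord hB g)).
  by rewrite scalerBr opprD !addrA; congr (_ + _); rewrite -!addrA; congr (_ + _); rewrite addrC.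
by case: (hI) => _ hD _; apply: hD; [apply: idealZ | ]; rewrite //; apply: coordP.
Qed.

Lemma coordI (K : fieldType) n D (I : {mpoly K[n]} -> Prop) (b : 'I_D -> {mpoly K[n]})
  (hI : is_ideal I) (hB : basis_mod I b) f : I f -> coord hB f = 0.
Proof. by move=> If; apply: coord_uniq => //; rewrite fa0 subr0. Qed.

Lemma coord_fa (K : fieldType) n D (I : {mpoly K[n]} -> Prop) (b : 'I_D -> {mpoly K[n]})
  (hI : is_ideal I) (hB : basis_mod I b) a : coord hB (fa b a) = a.
Proof. by apply: coord_uniq => //; rewrite subrr; case: hI. Qed.

Lemma fa_delta (K : fieldType) n D (b : 'I_D -> {mpoly K[n]}) s :
  fa b (delta_mx 0 s) = b s.
Proof.
rewrite /fa (bigD1 s) //= big1 ?addr0; first by rewrite mxE !eqxx scale1r.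
by move=> j /negbTE js; rewrite mxE js andbF scale0r.
Qed.

Definition cform (K : fieldType) n D (I : {mpoly K[n]} -> Prop) (b : 'I_D -> {mpoly K[n]})
  (hB : basis_mod I b) (v : 'I_D -> K) (f : {mpoly K[n]}) : K :=
  \sum_j coord hB f 0 j * v j.

Lemma cform_dual (K : fieldType) n D (I : {mpoly K[n]} -> Prop) (b : 'I_D -> {mpoly K[n]})
  (hI : is_ideal I) (hB : basis_mod I b) v : is_dual I (cform hB v).
Proof.
split.
  move=> a f g; rewrite /cform coord_lin // mulr_sumr -big_split; apply: eq_bigr => j _.
  by rewrite !mxE mulrDl mulrA.
by move=> f If; rewrite /cform coordI // big1 // => j _; rewrite mxE mul0r.
Qed.

Lemma cform_b (K : fieldType) n D (I : {mpoly K[n]} -> Prop) (b : 'I_D -> {mpoly K[n]})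
  (hI : is_ideal I) (hB : basis_mod I b) v s : cform hB v (b s) = v s.
Proof.
rewrite /cform -(fa_delta b s) coord_fa // (bigD1 s) //= big1 ?addr0.
  by rewrite mxE !eqxx mul1r.
by move=> j /negbTE js; rewrite mxE js andbF mul0r.
Qed.

Lemma ann_ideal (K : fieldType) n (I : {mpoly K[n]} -> Prop) l f :
  is_ideal I -> is_dual I l -> I f -> ann (useq l) f.
Proof.
move=> [_ _ hM] dl If; apply/(annM _ dl) => m; apply: dl.2; exact: hM.
Qed.

Lemma annI (K : fieldType) n (I : {mpoly K[n]} -> Prop) l f g :
  is_ideal I -> is_dual I l -> I (f - g) -> ann (useq l) f -> ann (useq l) g.
Proof.
move=> hI dl Ifg /(annM _ dl) H; apply/(annM _ dl) => m.
have -> : 'X_[m] * g = 'X_[m] * f - 'X_[m] * (f - g) by rewrite mulrBr opprB addrC subrK.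
rewrite (dualB _ _ dl) H sub0r (dl.2 _) ?oppr0 //.
by case: hI => _ _ hM; apply: hM.
Qed.

Lemma annJ (K : fieldType) n D (I : {mpoly K[n]} -> Prop) (b : 'I_D -> {mpoly K[n]})
  (hI : is_ideal I) (hB : basis_mod I b) l f :
  is_dual I l -> ann (useq l) f <-> forall j, l (f * b j) = 0.
Proof.
move=> dl; rewrite (annM _ dl); split=> H.
  move=> j; rewrite [b j]mpolyE mulr_sumr (dual_sum _ _ dl) big1 // => m _.
  by rewrite -scalerAr (dualZ _ _ dl) [f * _]mulrC H mulr0.
move=> m; set c := coord hB 'X_[m].
have -> : 'X_[m] * f = ('X_[m] - fa b c) * f + \sum_j c 0 j *: (f * b j).
  rewrite mulrBl /fa mulr_suml (eq_bigr (fun j => c 0 j *: (f * b j))) ?subrK //.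
  by move=> j _; rewrite -scalerAl mulrC.
rewrite (dualD _ _ dl) (dual_sum _ _ dl) (dl.2 _); last first.
  by apply: idealMr => //; apply: coordP.
by rewrite add0r big1 // => j _; rewrite (dualZ _ _ dl) H mulr0.
Qed.

Definition zform (K : fieldType) n : {mpoly K[n]} -> K := fun _ => 0.

Lemma zform_dual (K : fieldType) n (I : {mpoly K[n]} -> Prop) : is_dual I (@zform K n).
Proof. by split=> [a f g|f _]; rewrite /zform ?mulr0 ?addr0. Qed.

Lemma ann_zform (K : fieldType) n f : ann (useq (@zform K n)) f.
Proof. by move=> m; rewrite /pshift /pairing big1 // => i _; rewrite /useq /zform mulr0. Qed.

Definition alldual (K : fieldType) n (I : {mpoly K[n]} -> Prop)
  (L : nat -> {mpoly K[n]} -> K) := forall k, is_dual I (L k).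

Definition annN (K : fieldType) n (L : nat -> {mpoly K[n]} -> K) t f :=
  forall k, (k < t)%N -> ann (useq (L k)) f.

Definition Amx (K : fieldType) n D (b : 'I_D -> {mpoly K[n]}) t
  (L : nat -> {mpoly K[n]} -> K) : 'M[K]_(D, t * D) :=
  \matrix_(k < D) mxvec (\matrix_(i < t, j < D) L (val i) (b k * b j)).

Lemma AmxE (K : fieldType) n D (b : 'I_D -> {mpoly K[n]}) t L k i j :
  Amx b t L k (mxvec_index i j) = L (val i) (b k * b j).
Proof. by rewrite /Amx mxE mxvecE mxE. Qed.

Lemma rowA (K : fieldType) n D (I : {mpoly K[n]} -> Prop) (b : 'I_D -> {mpoly K[n]}) t L
  (dL : alldual I L) (a : 'rV[K]_D) i j :
  (a *m Amx b t L) 0 (mxvec_index i j) = L (val i) (fa b a * b j).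
Proof.
rewrite mxE /fa mulr_suml (dual_sum _ _ (dL _)); apply: eq_bigr => k _.
by rewrite AmxE -scalerAl (dualZ _ _ (dL _)).
Qed.

Lemma KE (K : fieldType) n D (I : {mpoly K[n]} -> Prop) (b : 'I_D -> {mpoly K[n]})
  (hI : is_ideal I) (hB : basis_mod I b) {t : nat} L (dL : alldual I L) (a : 'rV[K]_D) :
  a *m Amx b t L = 0 <-> annN L t (fa b a).
Proof.
split=> H.
  move=> k kt; apply/(annJ hI hB _ (dL k)) => j.
  have := congr1 (fun M : 'M_(1, t * D) => M 0 (mxvec_index (Ordinal kt) j)) H.
  by rewrite /= (rowA _ dL) mxE.
apply/matrixP => r c; rewrite (ord1 r) [RHS]mxE.
case: (mxvec_indexP c) => i j; rewrite (rowA _ dL).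
by have /(annJ hI hB _ (dL i)) := H i (ltn_ord i); apply.
Qed.

Lemma annN_mod (K : fieldType) n (I : {mpoly K[n]} -> Prop) t L f g :
  is_ideal I -> alldual I L -> I (f - g) -> annN L t f -> annN L t g.
Proof. by move=> hI dL Ifg H k kt; apply: (annI hI (dL k) Ifg); apply: H. Qed.

Lemma annN_ideal (K : fieldType) n (I : {mpoly K[n]} -> Prop) t L f :
  is_ideal I -> alldual I L -> I f -> annN L t f.
Proof. by move=> hI dL If k kt; exact: (ann_ideal hI (dL k) If). Qed.

Lemma annN_coord (K : fieldType) n D (I : {mpoly K[n]} -> Prop) (b : 'I_D -> {mpoly K[n]})
  (hI : is_ideal I) (hB : basis_mod I b) {t : nat} L (dL : alldual I L) f :
  annN L t f <-> annN L t (fa b (coord hB f)).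
Proof.
split=> H; apply: (annN_mod hI dL _ H); first exact: coordP.
by rewrite -opprB; apply: idealN => //; apply: coordP.
Qed.

Lemma F3 (K : fieldType) n D (I : {mpoly K[n]} -> Prop) (b : 'I_D -> {mpoly K[n]})
  (hI : is_ideal I) (hB : basis_mod I b) {t : nat} L (dL : alldual I L) f :
  \rank (Amx b t L) = D -> annN L t f -> I f.
Proof.
move=> rk /(annN_coord hI hB dL) /(KE hI hB dL) /sub_kermxP H.
have : kermx (Amx b t L) = 0.
  by apply/eqP; rewrite -mxrank_eq0 mxrank_ker rk subnn.
move=> k0; move: H; rewrite k0 submx0 => /eqP c0.
by have := coordP hB f; rewrite c0 fa0 subr0.
Qed.

Lemma F3' (K : fieldType) n D (I : {mpoly K[n]} -> Prop) (b : 'I_D -> {mpoly K[n]})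
  (hI : is_ideal I) (hB : basis_mod I b) {t : nat} L (dL : alldual I L) :
  (forall f, annN L t f -> I f) -> \rank (Amx b t L) = D.
Proof.
move=> H; apply/eqP; rewrite eqn_leq rank_leq_row /=; apply: NNPP => /negP.
rewrite -ltnNge => lt.
have : kermx (Amx b t L) != 0 by rewrite -mxrank_eq0 mxrank_ker subn_eq0 -ltnNge.
move=> /eqP nz; apply: nz; apply/row_matrixP => i; rewrite row0.
set a := row i _.
have /sub_kermxP /(KE hI hB dL) /H /(fa_eq0 hB) : (a <= kermx (Amx b t L))%MS by apply: row_sub.
done.
Qed.

Lemma RK (K : fieldType) n D (I : {mpoly K[n]} -> Prop) (b : 'I_D -> {mpoly K[n]})
  (hI : is_ideal I) (hB : basis_mod I b) {t t' : nat} L L' (dL : alldual I L) (dL' : alldual I L') :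
  (forall f, annN L t f -> annN L' t' f) -> (\rank (Amx b t' L') <= \rank (Amx b t L))%N.
Proof.
move=> H.
have : (kermx (Amx b t L) <= kermx (Amx b t' L'))%MS.
  apply/row_subP => i; apply/sub_kermxP/(KE hI hB dL')/H/(KE hI hB dL)/sub_kermxP.
  exact: row_sub.
move/mxrankS; rewrite !mxrank_ker => h.
have h1 := rank_leq_row (Amx b t L); have h2 := rank_leq_row (Amx b t' L').
by apply: NNPP => /negP; rewrite -ltnNge => lt; move: h; rewrite leqNgt ltn_sub2l // (leq_trans lt h2).
Qed.

Lemma RKs (K : fieldType) n D (I : {mpoly K[n]} -> Prop) (b : 'I_D -> {mpoly K[n]})
  (hI : is_ideal I) (hB : basis_mod I b) {t t' : nat} L L' (dL : alldual I L) (dL' : alldual I L') :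
  (forall f, annN L t f -> annN L' t' f) -> (exists f, annN L' t' f /\ ~ annN L t f) ->
  (\rank (Amx b t' L') < \rank (Amx b t L))%N.
Proof.
move=> H [f [f1 f2]].
have : (kermx (Amx b t L) < kermx (Amx b t' L'))%MS.
  rewrite ltmxE; apply/andP; split.
    apply/row_subP => i; apply/sub_kermxP/(KE hI hB dL')/H/(KE hI hB dL)/sub_kermxP.
    exact: row_sub.
  apply/negP => sub; apply: f2.
  apply/(annN_coord hI hB dL). apply/(KE hI hB dL). apply/sub_kermxP. apply: (submx_trans _ sub).
  apply/sub_kermxP/(KE hI hB dL'); exact: (proj1 (annN_coord hI hB dL' f) f1).
move/rank_ltmx; rewrite !mxrank_ker => h.
have h1 := rank_leq_row (Amx b t L); have h2 := rank_leq_row (Amx b t' L').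
apply: NNPP => /negP; rewrite -leqNgt => le; move: h; rewrite ltnNge.
by rewrite leq_sub2l.
Qed.

Definition pb (P : Prop) : bool := if excluded_middle_informative P then true else false.
Lemma pbP (P : Prop) : reflect P (pb P).
Proof. by rewrite /pb; case: excluded_middle_informative => h; constructor. Qed.

Definition achieves (K : fieldType) n D (I : {mpoly K[n]} -> Prop) (b : 'I_D -> {mpoly K[n]})
  t r := exists L, alldual I L /\ \rank (Amx b t L) = r.

Lemma ach_ex (K : fieldType) n D (I : {mpoly K[n]} -> Prop) (b : 'I_D -> {mpoly K[n]}) t :
  exists r, pb (achieves I b t r).
Proof.
exists (\rank (Amx b t (fun _ => @zform K n))); apply/pbP.
by exists (fun _ => @zform K n); split=> // k; apply: zform_dual.
Qed.

Lemma ach_ub (K : fieldType) n D (I : {mpoly K[n]} -> Prop) (b : 'I_D -> {mpoly K[n]}) t r :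
  pb (achieves I b t r) -> (r <= D)%N.
Proof. by move=> /pbP [L [_ <-]]; apply: rank_leq_row. Qed.

Definition rt (K : fieldType) n D (I : {mpoly K[n]} -> Prop) (b : 'I_D -> {mpoly K[n]}) t :=
  ex_maxn (ach_ex I b t) (@ach_ub K n D I b t).

Lemma rt_spec (K : fieldType) n D (I : {mpoly K[n]} -> Prop) (b : 'I_D -> {mpoly K[n]}) t :
  achieves I b t (rt I b t) /\
  forall L, alldual I L -> (\rank (Amx b t L) <= rt I b t)%N.
Proof.
rewrite /rt; case: ex_maxnP => r /pbP Hr Hmax; split=> // L dL.
by apply: Hmax; apply/pbP; exists L.
Qed.

Lemma rt_le (K : fieldType) n D (I : {mpoly K[n]} -> Prop) (b : 'I_D -> {mpoly K[n]}) t :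
  (rt I b t <= D)%N.
Proof. by have [[L [_ <-]] _] := rt_spec I b t; apply: rank_leq_row. Qed.

Lemma rt_mono (K : fieldType) n D (I : {mpoly K[n]} -> Prop) (b : 'I_D -> {mpoly K[n]})
  (hI : is_ideal I) (hB : basis_mod I b) t : (rt I b t <= rt I b t.+1)%N.
Proof.
have [[L [dL <-]] _] := rt_spec I b t; have [_ Hm] := rt_spec I b t.+1.
apply: leq_trans (Hm L dL).
by apply: (RK hI hB dL dL) => f H k kt; apply: H; apply: ltnW.
Qed.

Lemma dual_sep (K : fieldType) n D (I : {mpoly K[n]} -> Prop) (b : 'I_D -> {mpoly K[n]})
  (hI : is_ideal I) (hB : basis_mod I b) f :
  ~ I f -> exists l, is_dual I l /\ l f != 0.
Proof.
move=> nIf.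
have [j cj] : exists j, coord hB f 0 j != 0.
  apply: NNPP => H; apply: nIf.
  have c0 : coord hB f = 0.
    apply/matrixP => i j; rewrite (ord1 i) [RHS]mxE; apply/eqP; apply: NNPP => h; apply: H.
    by exists j; apply/negP.
  by have := coordP hB f; rewrite c0 fa0 subr0.
exists (fun g => coord hB g 0 j); split=> //; split.
  by move=> a g h; rewrite coord_lin // !mxE.
by move=> g Ig; rewrite coordI // mxE.
Qed.

Lemma rt_inc (K : fieldType) n D (I : {mpoly K[n]} -> Prop) (b : 'I_D -> {mpoly K[n]})
  (hI : is_ideal I) (hB : basis_mod I b) t :
  (rt I b t < D)%N -> (rt I b t < rt I b t.+1)%N.
Proof.
move=> lt.
have [[L [dL rk]] _] := rt_spec I b t; have [_ Hm] := rt_spec I b t.+1.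
have [f [af nIf]] : exists f, annN L t f /\ ~ I f.
  apply: NNPP => H.
  have : \rank (Amx b t L) = D.
    apply: (F3' hI hB dL) => f af; apply: NNPP => nIf; apply: H; by exists f.
  by rewrite rk => e; move: lt; rewrite e ltnn.
have [l [dl lf]] := dual_sep hI hB nIf.
pose L' k := if k == t then l else L k.
have dL' : alldual I L' by move=> k; rewrite /L'; case: eqP.
apply: leq_trans (Hm L' dL'); rewrite -rk.
apply: (RKs hI hB dL' dL).
  move=> g H k kt; have := H k (ltnW kt); rewrite /L'.
  by case: eqP => // e; move: kt; rewrite e ltnn.
exists f; split=> // H; have := H t (ltnSn t); rewrite /L' eqxx.
move=> /(annM _ dl) /(_ 0%MM); rewrite mpolyX0 mul1r => e.
by move: lf; rewrite e eqxx.
Qed.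

Lemma rt_ge (K : fieldType) n D (I : {mpoly K[n]} -> Prop) (b : 'I_D -> {mpoly K[n]})
  (hI : is_ideal I) (hB : basis_mod I b) t : (t <= D)%N -> (t <= rt I b t)%N.
Proof.
elim: t => // t IH tD.
have := IH (ltnW tD); case: (ltnP (rt I b t) D) => h1 h2.
  by apply: leq_ltn_trans h2 (rt_inc hI hB h1).
by apply: leq_trans tD (leq_trans h1 (rt_mono hI hB t)).
Qed.

Definition ext (K : fieldType) n T (l : 'I_T -> {mpoly K[n]} -> K) (k : nat) :
  {mpoly K[n]} -> K := oapp l (@zform K n) (insub k).

Lemma ext_dual (K : fieldType) n (I : {mpoly K[n]} -> Prop) T (l : 'I_T -> {mpoly K[n]} -> K) :
  (forall i, is_dual I (l i)) -> alldual I (ext l).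
Proof. by move=> dl k; rewrite /ext; case: insubP => [i _ _|_] /=; [apply: dl | apply: zform_dual]. Qed.

Lemma ext_val (K : fieldType) n T (l : 'I_T -> {mpoly K[n]} -> K) (i : 'I_T) :
  ext l (val i) = l i.
Proof. by rewrite /ext valK. Qed.

Lemma AF (K : fieldType) n T (l : 'I_T -> {mpoly K[n]} -> K) t f :
  ann_first l t f <-> annN (ext l) t f.
Proof.
split=> H.
  move=> k kt; rewrite /ext; case: insubP => [i _ ei|_] /=; last exact: ann_zform.
  by apply: H; rewrite ei.
by move=> i it; rewrite -ext_val; apply: H.
Qed.

Definition var (K : fieldType) T D (k : nat) (s : 'I_D) : {mpoly K[T * D]} :=
  oapp (fun i : 'I_T => 'X_(mxvec_index i s)) 0 (insub k).

Lemma var_eval (K : fieldType) n D T (b : 'I_D -> {mpoly K[n]}) (l : 'I_T -> {mpoly K[n]} -> K) k s :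
  (@var K T D k s).@[coords b l] = ext l k (b s).
Proof.
rewrite /var /ext; case: insubP => [i _ _|_] /=; last by rewrite meval0.
by rewrite mevalXU /coords mxvecE mxE.
Qed.

Definition PA (K : fieldType) n D (I : {mpoly K[n]} -> Prop) (b : 'I_D -> {mpoly K[n]})
  (hB : basis_mod I b) T t : 'M[{mpoly K[T * D]}]_(D, t * D) :=
  \matrix_(k < D) mxvec (\matrix_(i < t, j < D)
      \sum_s (coord hB (b k * b j)) 0 s *: @var K T D (val i) s).

Lemma PA_eval (K : fieldType) n D (I : {mpoly K[n]} -> Prop) (b : 'I_D -> {mpoly K[n]})
  (hI : is_ideal I) (hB : basis_mod I b) T (l : 'I_T -> {mpoly K[n]} -> K)
  (dl : forall i, is_dual I (l i)) t :
  map_mx (meval (coords b l)) (PA hB T t) = Amx b t (ext l).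
Proof.
apply/matrixP => r c; case: (mxvec_indexP c) => i j.
rewrite AmxE mxE /PA mxE mxvecE mxE raddf_sum /=.
have dL := ext_dual dl (val i).
rewrite (eq_bigr (fun s => coord hB (b r * b j) 0 s * ext l (val i) (b s))); last first.
  by move=> s _; rewrite mevalZ var_eval.
have -> : ext l (val i) (b r * b j) = ext l (val i) (fa b (coord hB (b r * b j))).
  by apply/eqP; rewrite -subr_eq0 -(dualB _ _ dL) (dL.2 _ (coordP hB _)).
by rewrite /fa (dual_sum _ _ dL); apply: eq_bigr => s _; rewrite (dualZ _ _ dL).
Qed.

Definition Delta (K : fieldType) n D (I : {mpoly K[n]} -> Prop) (b : 'I_D -> {mpoly K[n]})
  (hB : basis_mod I b) T t r (U : 'M[K]_(r, D)) (V : 'M[K]_(t * D, r)) : {mpoly K[T * D]} :=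
  \det (map_mx (fun c => c%:MP) U *m PA hB T t *m map_mx (fun c => c%:MP) V).

Lemma Delta_eval (K : fieldType) n D (I : {mpoly K[n]} -> Prop) (b : 'I_D -> {mpoly K[n]})
  (hI : is_ideal I) (hB : basis_mod I b) T (l : 'I_T -> {mpoly K[n]} -> K)
  (dl : forall i, is_dual I (l i)) t r U V :
  (@Delta K n D I b hB T t r U V).@[coords b l] = \det (U *m Amx b t (ext l) *m V).
Proof.
rewrite /Delta -(det_map_mx (meval (coords b l))) !map_mxM PA_eval //.
congr (\det (_ *m _ *m _)); apply/matrixP => i j; by rewrite !mxE /= mevalC.
Qed.

Lemma Wit (K : fieldType) D m (A : 'M[K]_(D, m)) r :
  \rank A = r -> exists (U : 'M[K]_(r, D)) (V : 'M[K]_(m, r)), \det (U *m A *m V) != 0.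
Proof.
move=> <-; exists (pid_mx (\rank A) *m invmx (col_ebase A)).
exists (invmx (row_ebase A) *m pid_mx (\rank A)).
have E := mulmx_ebase A; have uC := col_ebase_unit A; have uR := row_ebase_unit A.
move: E uC uR; set C := col_ebase A; set R := row_ebase A; set rk := \rank A => E uC uR.
have -> : pid_mx rk *m invmx C *m A *m (invmx R *m pid_mx rk) = (pid_mx rk : 'M_(rk, D)) *m (pid_mx rk : 'M_(D, m)) *m (pid_mx rk : 'M_(m, rk)).
  rewrite -E !mulmxA mulmxKV // -[_ *m R *m invmx R]mulmxA mulmxV // mulmx1.
  done.
have h1 : (rk <= D)%N by apply: rank_leq_row. have h2 : (rk <= m)%N by apply: rank_leq_col.
by rewrite !mul_pid_mx !minnn (minn_idPr h1) minnn (minn_idPr h2) pid_mx_1 det1 oner_neq0.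
Qed.

Lemma RD (K : fieldType) D m (A : 'M[K]_(D, m)) r (U : 'M[K]_(r, D)) V :
  \det (U *m A *m V) != 0 -> (r <= \rank A)%N.
Proof.
move=> h; have : U *m A *m V \in unitmx by rewrite unitmxE unitfE.
move/mxrank_unit => e; rewrite -{1}e.
exact: leq_trans (mxrankM_maxl _ _) (mxrankM_maxr _ _).
Qed.

Lemma Amx_ext (K : fieldType) n D (b : 'I_D -> {mpoly K[n]}) t L L' :
  (forall k, (k < t)%N -> L k = L' k) -> Amx b t L = Amx b t L'.
Proof. by move=> H; apply/matrixP => r c; case: (mxvec_indexP c) => i j; rewrite !AmxE H ?ltn_ord. Qed.

Lemma ext_lt (K : fieldType) n T (L : nat -> {mpoly K[n]} -> K) k :
  (k < T)%N -> ext (fun i : 'I_T => L (val i)) k = L k.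
Proof. by move=> kT; rewrite /ext insubT. Qed.

Lemma coords_ex (K : fieldType) n D (I : {mpoly K[n]} -> Prop) (b : 'I_D -> {mpoly K[n]})
  (hI : is_ideal I) (hB : basis_mod I b) T (x : 'I_(T * D) -> K) :
  exists l : 'I_T -> {mpoly K[n]} -> K, (forall i, is_dual I (l i)) /\ coords b l = x.
Proof.
exists (fun i => cform hB (fun s => x (mxvec_index i s))); split.
  by move=> i; apply: cform_dual.
apply: functional_extensionality => k; case: (mxvec_indexP k) => i s.
by rewrite /coords mxvecE mxE cform_b.
Qed.

Lemma IFseq (K : fieldType) N (s : seq {mpoly K[N]}) : infinite_field K ->
  (forall p, p \in s -> exists x, p.@[x] != 0) -> exists x, (\prod_(p <- s) p).@[x] != 0.
Proof.
move=> inf; elim: s => [|p s IH] H.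
  by exists (fun _ => 0); rewrite big_nil meval1 oner_neq0.
rewrite big_cons; apply: IF2 => //; first by apply: H; rewrite mem_head.
by apply: IH => q qs; apply: H; rewrite in_cons qs orbT.
Qed.

Theorem proposition1 (K : fieldType) (n D : nat) (I : {mpoly K[n]} -> Prop)
    (b : 'I_D -> {mpoly K[n]}) :
  perfect_field K -> infinite_field K ->
  is_ideal I -> basis_mod I b ->
  exists! tau : nat, (tau <= D)%N /\ generically_good I b tau.
Proof.
move=> _ inf hI hB.
have rtD : rt I b D = D by apply/eqP; rewrite eqn_leq rt_le rt_ge.
have exT : exists t, rt I b t == D by exists D; rewrite rtD.
case: (ex_minnP exT) => T /eqP rtT minT.
have TD : (T <= D)%N by apply: minT; rewrite rtD.
have ltT : forall t, (t < T)%N -> (rt I b t < D)%N.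
  move=> t tT; rewrite ltn_neqAle rt_le andbT; apply/negP => /minT.
  by rewrite leqNgt tT.
exists T; split.
  split=> //.
  have ch : forall t : 'I_T.+1, exists UV : 'M[K]_(rt I b t, D) * 'M[K]_(t * D, rt I b t),
      exists L, alldual I L /\ \det (UV.1 *m Amx b t L *m UV.2) != 0.
    move=> t; have [[L [dL rk]] _] := rt_spec I b t.
    have [U [V dUV]] := Wit rk; by exists (U, V); exists L.
  pose UV t := proj1_sig (constructive_indefinite_description _ (ch t)).
  have UVP : forall t, exists L, alldual I L /\ \det ((UV t).1 *m Amx b t L *m (UV t).2) != 0.
    by move=> t; rewrite /UV; case: constructive_indefinite_description.
  pose Dl (t : 'I_T.+1) := Delta hB T (UV t).1 (UV t).2.
  pose s := [seq Dl t | t <- enum 'I_T.+1].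
  pose p := \prod_(q <- s) q.
  exists (fun q => q = p); split.
    have [x px] : exists x, p.@[x] != 0.
      apply: IFseq => // q /mapP [t _ ->].
      have [L [dL dt]] := UVP t.
      pose l := fun i : 'I_T => L (val i).
      have dl : forall i, is_dual I (l i) by move=> i; apply: dL.
      exists (coords b l); rewrite /Dl Delta_eval //.
      rewrite (@Amx_ext _ _ _ _ _ _ L) //.
      move=> k kt; apply: ext_lt; apply: leq_trans kt _; rewrite -ltnS; apply: ltn_ord.
    by exists x, p; split=> //; apply/eqP.
  move=> x [q [-> px]] l dl cx.
  have Dnz : forall t : 'I_T.+1, (Dl t).@[x] != 0.
    move=> t; apply/eqP => h; apply: px; rewrite rmorph_prod; apply/eqP.
    rewrite prodf_seq_eq0; apply/hasP; exists (Dl t); last by apply/eqP; exact: h.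
    by rewrite /s; apply: map_f; rewrite mem_enum.
  have dL := ext_dual dl.
  have rkE : forall t, (t <= T)%N -> \rank (Amx b t (ext l)) = rt I b t.
    move=> t tT; apply/eqP; rewrite eqn_leq (rt_spec I b t).2 //=.
    have := Dnz (Ordinal (tT : (t < T.+1)%N)); rewrite -cx /Dl Delta_eval //.
    exact: RD.
  split.
    move=> t t1 tT; split.
      by move=> f /AF H; apply/AF => k kt; apply: H; apply: ltnW.
    apply: NNPP => H.
    have H' : forall f, annN (ext l) t f -> annN (ext l) t.+1 f.
      move=> f a; apply: NNPP => na; apply: H; exists f; split; first exact/AF.
      by move/AF.
    have := RK hI hB dL dL H'; rewrite !rkE ?(ltnW tT) //.
    by rewrite leqNgt (rt_inc hI hB (ltT t tT)).
  move=> f; split.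
    move/AF => a; apply: (F3 hI hB dL _ a); by rewrite rkE.
  by move=> If; apply/AF; exact: (annN_ideal hI dL If).
move=> tau' [tau'D [S [[x0 [p0 [Sp0 p0x0]]] HP]]].
have Tle : (T <= tau')%N.
  have [l0 [dl0 cx0]] := coords_ex hI hB x0.
  have [_ seq0] := HP x0 (ex_intro _ p0 (conj Sp0 p0x0)) l0 dl0 cx0.
  have dL0 := ext_dual dl0.
  have rk : \rank (Amx b tau' (ext l0)) = D.
    by apply: (F3' hI hB dL0) => f a; apply/(seq0 f); apply/AF.
  apply: minT; rewrite eqn_leq rt_le /= -{1}rk.
  exact: (rt_spec I b tau').2.
apply/eqP; rewrite eqn_leq Tle /= leqNgt; apply/negP => ltT'.
have T1 : (1 <= T)%N.
  rewrite lt0n; apply/eqP => T0; move: ltT'; rewrite T0 => h.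
  have [[L [_ rkL]] _] := rt_spec I b 0.
  have := rank_leq_col (Amx b 0 L); rewrite rkL mul0n => h0; have := rtT; rewrite T0 => rt0; move: h0; rewrite rt0 leqn0 => /eqP D0.
  by move: tau'D h; rewrite D0 leqn0 => /eqP ->.
have [[L [dL rkL]] _] := rt_spec I b T.
have [U [V dUV]] := Wit rkL.
pose Dt := Delta hB tau' U V.
have [z pz] : exists z, (p0 * Dt).@[z] != 0.
  apply: IF2 => //; first by exists x0; apply/eqP.
  pose l := fun i : 'I_tau' => L (val i).
  have dl : forall i, is_dual I (l i) by move=> i; apply: dL.
  exists (coords b l); rewrite /Dt Delta_eval //.
  rewrite (@Amx_ext _ _ _ _ _ _ L) //.
  by move=> k kt; apply: ext_lt; apply: ltn_trans kt ltT'.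
move: pz; rewrite mevalM mulf_eq0 negb_or => /andP [pz1 pz2].
have [l [dl cz]] := coords_ex hI hB z.
have [st _] := HP z (ex_intro _ p0 (conj Sp0 (elimN eqP pz1))) l dl cz.
have [_ [f [af naf]]] := st T T1 ltT'.
have dLl := ext_dual dl.
apply: naf; apply/AF; apply: (annN_ideal hI dLl).
apply: (F3 (t:=T) hI hB dLl); last by apply/AF.
apply/eqP; rewrite eqn_leq rank_leq_row /=.
move: pz2; rewrite -cz /Dt Delta_eval // => h.
by have := RD h; rewrite rtT.
Qed.
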